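(* Let $p$ be a prime number and $G$ a transitive group of degree $p^{2}$. Then there exists $s\in\mathfrak{S}_{p^{2}}$ such that $sGs^{-1}$ contains $P_{1}$ or $P'_{1}$.
   Context: Transitive group of degree $p^2$: a subgroup of $\mathfrak{S}_{p^2}$ acting transitively on $\mathbb{Z}/p^2$. Identify $\mathbb{Z}/p^{2}$ with $\mathbb{F}_{p}\times\mathbb{F}_{p}$ via $a+pb\mapsto(a\bmod p,b\bmod p)$ ($0\le a,b\le p-1$). Let $\rho_{1}(i,j)=(i,j+1)$, $\rho_{2}(i,j)=(i+1,j)$; for $i_0\in\{0,\dots,p-1\}$, $z_{i_0}(i_0,j)=(i_0,j+1)$ and $z_{i_0}(i,j)=(i,j)$ for $i\ne i_0$. With $a_{i,j}=(-1)^{i-j}\binom{i}{j}$ for $i\ge j$ and $0$ otherwise, $\gamma_{n}:=z_{0}^{a_{p-n,0}}\cdots z_{p-1}^{a_{p-n,p-1}}$. Put $\tau:=z_{p-1}\rho_{2}$, $P_{1}:=\langle\tau,\gamma_{1}\rangle$ and $P'_{1}:=\langle\rho_{1},\rho_{2},\gamma_{1}\rangle$. *)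

(* Defs.v *)
From HB Require Import structures.
From mathcomp Require Import all_boot all_order all_algebra all_fingroup.
Set Implicit Arguments. Unset Strict Implicit. Unset Printing Implicit Defensive.
Import GRing.Theory.

Local Open Scope group_scope.

(* Points of Z/p^2 are the ordinals 'I_(p^2); n = a + p*b corresponds to the
   pair (a, b) = (n %% p, n %/ p) of F_p x F_p. *)

Definition coordmap (p : nat) (F : nat -> nat -> nat * nat)
  (x : 'I_(p ^ 2)) : 'I_(p ^ 2) :=
  let ij := F (x %% p)%N (x %/ p)%N in
  insubd x (ij.1 %% p + p * (ij.2 %% p))%N.

(* The permutation equal to f (f will always be a bijection below;
   the default 1 is never used in that case). *)
Definition mkperm (n : nat) (f : 'I_n -> 'I_n) : {perm 'I_n} :=
  odflt 1 [pick s : {perm 'I_n} | [forall x, s x == f x]].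

(* Function composition s o t ("apply t first"), in MathComp's
   left-to-right product convention. *)
Definition fcomp (n : nat) (s t : {perm 'I_n}) : {perm 'I_n} := t * s.

Definition rho1 (p : nat) : {perm 'I_(p ^ 2)} :=
  @mkperm (p ^ 2) (@coordmap p (fun i j => (i, j.+1))).
Definition rho2 (p : nat) : {perm 'I_(p ^ 2)} :=
  @mkperm (p ^ 2) (@coordmap p (fun i j => (i.+1, j))).

Definition zz (p i0 : nat) : {perm 'I_(p ^ 2)} :=
  @mkperm (p ^ 2) (@coordmap p (fun i j => if i == i0 then (i, j.+1) else (i, j))).

Definition zpow (gT : finGroupType) (x : gT) (k : int) : gT :=
  match k with Posz n => x ^+ n | Negz n => x ^- n.+1 end.

Definition acoef (i j : nat) : int :=
  if (j <= i)%N then ((-1) ^+ (i - j) * ('C(i, j))%:Z)%R else 0%R.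

Definition gamma (p n : nat) : {perm 'I_(p ^ 2)} :=
  \big[@fcomp (p ^ 2)/1]_(i < p) zpow (zz p i) (acoef (p - n) i).

Definition tau (p : nat) : {perm 'I_(p ^ 2)} := fcomp (zz p (p - 1)) (rho2 p).

Definition P1 (p : nat) : {group {perm 'I_(p ^ 2)}} :=
  <<[set tau p; gamma p 1]>>%G.
Definition P1' (p : nat) : {group {perm 'I_(p ^ 2)}} :=
  <<[set rho1 p; rho2 p; gamma p 1]>>%G.

(* Main.v *)
Require Import Defs.
From mathcomp Require Import all_boot all_order all_algebra all_fingroup.
From mathcomp Require Import all_solvable zify ring.
Local Open Scope group_scope.
Set Implicit Arguments. Unset Strict Implicit. Unset Printing Implicit Defensive.
Import GRing.Theory.

Section Coord.
Variable p : nat.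
Hypothesis p_gt0 : (0 < p)%N.

Lemma pt_eq (x y : 'I_(p ^ 2)) : (x %% p = y %% p)%N -> (x %/ p = y %/ p)%N -> x = y.
Proof. by move=> h1 h2; apply: val_inj; rewrite /= (divn_eq x p) (divn_eq y p) h1 h2. Qed.

Lemma cj_lt (x : 'I_(p ^ 2)) : (x %/ p < p)%N.
Proof. by rewrite ltn_divLR // -(expnS p 1) ltn_ord. Qed.

Lemma ci_lt (x : 'I_(p ^ 2)) : (x %% p < p)%N.
Proof. by rewrite ltn_mod. Qed.

Lemma val_lt a b : (a %% p + p * (b %% p) < p ^ 2)%N.
Proof.
have h1 := ltn_pmod a p_gt0; have h2 := ltn_pmod b p_gt0.
rewrite expnS expn1; apply: (@leq_trans (p + p * (b %% p))); first by rewrite ltn_add2r.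
by rewrite -mulnS leq_mul2l h2 orbT.
Qed.

Lemma val_mod a b : ((a %% p + p * (b %% p)) %% p = a %% p)%N.
Proof. by rewrite addnC mulnC modnMDl modn_mod. Qed.

Lemma val_div a b : ((a %% p + p * (b %% p)) %/ p = b %% p)%N.
Proof. by rewrite addnC mulnC divnMDl // divn_small ?addn0 // ltn_pmod. Qed.

Lemma coordmapE F (x : 'I_(p ^ 2)) :
  val (coordmap F x) = ((F (x %% p) (x %/ p)).1 %% p + p * ((F (x %% p) (x %/ p)).2 %% p))%N.
Proof. by rewrite /coordmap insubdK // unfold_in val_lt. Qed.

Lemma coordmap_ci F (x : 'I_(p ^ 2)) :
  (coordmap F x %% p = (F (x %% p) (x %/ p)).1 %% p)%N.
Proof. by rewrite coordmapE val_mod. Qed.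

Lemma coordmap_cj F (x : 'I_(p ^ 2)) :
  (coordmap F x %/ p = (F (x %% p) (x %/ p)).2 %% p)%N.
Proof. by rewrite coordmapE val_div. Qed.

Lemma mkpermE n (f : 'I_n -> 'I_n) : injective f -> forall x, mkperm f x = f x.
Proof.
move=> fi x; rewrite /mkperm; case: pickP => [s /forallP H | H] /=.
  exact/eqP.
have := H (perm fi); rewrite /=; case/forallP => y; by rewrite permE.
Qed.

Lemma coordmap_inj F G :
  (forall i j, (i < p)%N -> (j < p)%N ->
     ((G ((F i j).1 %% p) ((F i j).2 %% p)).1 %% p = i)%N /\
     ((G ((F i j).1 %% p) ((F i j).2 %% p)).2 %% p = j)%N) ->
  injective (@coordmap p F).
Proof.
move=> H; apply: (@can_inj _ _ _ (@coordmap p G)) => x.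
have [h1 h2] := H _ _ (ci_lt x) (cj_lt x).
by apply: pt_eq; rewrite !(coordmap_ci, coordmap_cj).
Qed.

End Coord.

Section Perms.
Variable p : nat.
Hypothesis p_gt0 : (0 < p)%N.

Lemma succ_pred_mod j : (j < p)%N -> ((j.+1 %% p + (p - 1)) %% p = j)%N.
Proof.
move=> hj; rewrite modnDml addSn -addnS subn1 prednK // modnDr modn_small //.
Qed.

Lemma rho1_inj : injective (@coordmap p (fun i j => (i, j.+1))).
Proof.
apply: (@coordmap_inj p p_gt0 _ (fun i j => (i, j + (p - 1))%N)) => i j hi hj /=.
by rewrite modn_mod modn_small // succ_pred_mod.
Qed.

Lemma rho2_inj : injective (@coordmap p (fun i j => (i.+1, j))).
Proof.
apply: (@coordmap_inj p p_gt0 _ (fun i j => (i + (p - 1), j)%N)) => i j hi hj /=.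
by rewrite succ_pred_mod // modn_mod modn_small.
Qed.

Lemma zz_inj i0 : (i0 < p)%N ->
  injective (@coordmap p (fun i j => if i == i0 then (i, j.+1) else (i, j))).
Proof.
move=> hi0.
apply: (@coordmap_inj p p_gt0 _ (fun i j => if i == i0 then (i, j + (p - 1))%N else (i, j))).
move=> i j hi hj; case: (eqVneq i i0) => [->|ne] /=.
  by rewrite (modn_small hi0) eqxx /= succ_pred_mod // modn_small.
by rewrite (modn_small hi) (negPf ne) /= !modn_small.
Qed.

Lemma rho1_ci x : (rho1 p x %% p = x %% p)%N.
Proof. by rewrite /rho1 mkpermE ?coordmap_ci ?modn_mod //; apply: rho1_inj. Qed.
Lemma rho1_cj x : (rho1 p x %/ p = (x %/ p).+1 %% p)%N.
Proof. by rewrite /rho1 mkpermE ?coordmap_cj //; apply: rho1_inj. Qed.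
Lemma rho2_ci x : (rho2 p x %% p = (x %% p).+1 %% p)%N.
Proof. by rewrite /rho2 mkpermE ?coordmap_ci //; apply: rho2_inj. Qed.
Lemma rho2_cj x : (rho2 p x %/ p = x %/ p)%N.
Proof. rewrite /rho2 mkpermE; last exact: rho2_inj. by rewrite coordmap_cj //; apply: modn_small; apply: cj_lt. Qed.
Lemma zz_ci i0 x : (i0 < p)%N -> (zz p i0 x %% p = x %% p)%N.
Proof.
move=> h; rewrite /zz mkpermE; last exact: zz_inj.
by rewrite coordmap_ci //; case: eqP => _; apply: modn_mod.
Qed.
Lemma zz_cj i0 x : (i0 < p)%N ->
  (zz p i0 x %/ p = if x %% p == i0 then (x %/ p).+1 %% p else x %/ p)%N.
Proof.
move=> h; rewrite /zz mkpermE; last exact: zz_inj.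
by rewrite coordmap_cj //; case: eqP => _ //; apply: modn_small; apply: cj_lt.
Qed.

End Perms.

Section Pows.
Variable p : nat.
Hypothesis p_gt0 : (0 < p)%N.

Lemma modSm a : ((a %% p).+1 %% p = a.+1 %% p)%N.
Proof. by rewrite -[a.+1]addn1 -[(a %% p).+1]addn1 modnDml. Qed.
Lemma expS_apply (T : finType) (s : {perm T}) k x : (s ^+ k.+1) x = s ((s ^+ k) x).
Proof. by rewrite expgSr permM. Qed.

Lemma rho1X_ci m x : ((rho1 p ^+ m) x %% p = x %% p)%N.
Proof. elim: m => [|m IH]; first by rewrite expg0 perm1. by rewrite expgSr permM rho1_ci. Qed.

Lemma rho1X_cj m x : ((rho1 p ^+ m) x %/ p = (x %/ p + m) %% p)%N.
Proof.
elim: m => [|m IH]; first by rewrite expg0 perm1 addn0 modn_small ?cj_lt.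
by rewrite expgSr permM rho1_cj // IH modSm addnS.
Qed.


Lemma rho2X_ci m x : ((rho2 p ^+ m) x %% p = (x %% p + m) %% p)%N.
Proof.
elim: m => [|m IH]; first by rewrite expg0 perm1 addn0 modn_mod.
by rewrite expgSr permM rho2_ci // IH modSm addnS.
Qed.

Lemma rho2X_cj m x : ((rho2 p ^+ m) x %/ p = x %/ p)%N.
Proof. elim: m => [|m IH]; first by rewrite expg0 perm1. by rewrite expgSr permM rho2_cj. Qed.

Lemma rho1_order : rho1 p ^+ p = 1.
Proof.
apply/permP => x; rewrite perm1; apply: pt_eq => //.
  by rewrite rho1X_ci.
by rewrite rho1X_cj modnDr modn_small ?cj_lt.
Qed.

Lemma rho2_order : rho2 p ^+ p = 1.
Proof.
apply/permP => x; rewrite perm1; apply: pt_eq => //.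
  by rewrite rho2X_ci modnDr modn_mod.
by rewrite rho2X_cj.
Qed.

Lemma zzX_ci i0 m x : (i0 < p)%N -> ((zz p i0 ^+ m) x %% p = x %% p)%N.
Proof. move=> h; elim: m => [|m IH]; first by rewrite expg0 perm1. by rewrite expgSr permM zz_ci. Qed.

Lemma zzX_cj i0 m x : (i0 < p)%N ->
  ((zz p i0 ^+ m) x %/ p = if x %% p == i0 then (x %/ p + m) %% p else x %/ p)%N.
Proof.
move=> h; case: ifP => e.
  elim: m => [|m IH].
    by rewrite expg0 perm1 addn0 modn_small // cj_lt.
  by rewrite expgSr permM (zz_cj p_gt0 _ h) (zzX_ci m x h) e IH modSm addnS.
elim: m => [|m IH]; first by rewrite expg0 perm1.
by rewrite expgSr permM (zz_cj p_gt0 _ h) (zzX_ci m x h) e IH.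
Qed.

Lemma zz_order i0 : (i0 < p)%N -> zz p i0 ^+ p = 1.
Proof.
move=> h; apply/permP => x; rewrite perm1; apply: pt_eq => //.
  by rewrite zzX_ci.
by rewrite zzX_cj //; case: ifP => _ //; rewrite modnDr modn_small ?cj_lt.
Qed.
End Pows.

Lemma zpow_one (gT : finGroupType) (z : gT) (p : nat) (k : int) :
  (1 < p)%N -> z ^+ p = 1 -> (p%:Z %| (k - 1)%R)%Z -> zpow z k = z.
Proof.
move=> p1 zp; case: k => n /= hd.
  case: n hd => [|n] hd.
    by move: hd; rewrite dvdzE /= dvdn1 => /eqP ep; rewrite ep in p1.
  have hn : (p %| n)%N.
    by move: hd; rewrite dvdzE /= subn1.
  by rewrite expgSr -(expg_mod _ zp) (eqP hn) expg0 mul1g.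
have hn : (p %| n.+2)%N.
  by move: hd; rewrite dvdzE; have -> : (Negz n - 1 = - (n.+2)%:Z)%R by lia.
have e : z ^+ n.+2 = 1 by rewrite -(expg_mod _ zp) (eqP hn) expg0.
by move/eqP: e; rewrite expgSr mulg_eq1 => /eqP ->; rewrite invgK.
Qed.


Lemma acoef_step q i : (i < q)%N ->
  acoef q i = (acoef q i.+1 - (-1) ^+ (q - i.+1) * ('C(q.+1, i.+1))%:Z)%R.
Proof.
move=> hi; rewrite /acoef (ltnW hi) hi binS PoszD.
have -> : (q - i = (q - i.+1).+1)%N by lia.
rewrite exprS; ring.
Qed.

Lemma acoef_mod p i : prime p -> (i < p)%N -> (p%:Z %| (acoef p.-1 i - 1)%R)%Z.
Proof.
move=> pp ip; have p0 := prime_gt0 pp.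
set q := p.-1; have pq : p = q.+1 by rewrite /q prednK.
have iq : (i <= q)%N by rewrite -ltnS -pq.
have [d [hd ->]] : exists d, (d <= q)%N /\ i = (q - d)%N.
  by exists (q - i)%N; rewrite subKn // leq_subr.
move: hd; clear iq ip.
elim: d => [|d IH] hd.
  by rewrite subn0 /acoef leqnn subnn expr0 mul1r binn subrr dvdz0.
have hlt : (q - d.+1 < q)%N by lia.
rewrite acoef_step //.
have -> : ((q - d.+1).+1 = q - d)%N by lia.
have -> : ((acoef q (q - d) - (-1) ^+ (q - (q - d)) * ('C(q.+1, (q - d)))%:Z - 1)
   = (acoef q (q - d) - 1) - (-1) ^+ (q - (q - d)) * ('C(q.+1, (q - d)))%:Z)%R by ring.
rewrite rpredB ?IH //; first by lia.
apply: dvdz_mull; rewrite dvdzE /= -pq; apply: prime_dvd_bin => //.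
by apply/andP; split; lia.
Qed.

Section Gam.
Variable p : nat.
Hypothesis p_gt0 : (0 < p)%N.

Lemma prod_zz n m (x : 'I_(p ^ 2)) : (m + n <= p)%N ->
  ((\big[@fcomp (p ^ 2)/1%g]_(i < n) zz p (m + i)) x %% p = x %% p)%N /\
  ((\big[@fcomp (p ^ 2)/1%g]_(i < n) zz p (m + i)) x %/ p =
     if (m <= x %% p < m + n)%N then (x %/ p).+1 %% p else x %/ p)%N.
Proof.
elim: n m x => [|n IH] m x hn.
  rewrite big_ord0 perm1; split => //.
  by rewrite addn0; case: (leqP m (x %% p)) => h //=; rewrite ltnNge h.
rewrite big_ord_recl /fcomp permM.
have hm : (m < p)%N by move: hn; lia.
rewrite (eq_bigr (fun i : 'I_n => zz p (m.+1 + i))); last first.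
  by move=> i _; rewrite /= /bump /= add1n addnS.
have hn2 : (m.+1 + n <= p)%N by move: hn; lia.
have [IH1 IH2] := IH m.+1 x hn2.
rewrite addn0 (zz_ci p_gt0 _ hm) (zz_cj p_gt0 _ hm) IH1 IH2; split => //.
case: (eqVneq (x %% p) m) => [e|ne].
  rewrite e ltnn /= leqnn /=.
  have -> : (m < m + n.+1)%N by lia.
  by [].
have -> : (m <= x %% p < m + n.+1)%N = (m.+1 <= x %% p < m.+1 + n)%N.
  by move: ne; lia.
by [].
Qed.

Lemma gamma1 : prime p -> gamma p 1 = rho1 p.
Proof.
move=> pp; rewrite /gamma.
rewrite (eq_bigr (fun i : 'I_p => zz p (0 + i))); last first.
  move=> i _; rewrite add0n; apply: (@zpow_one _ _ p); first exact: prime_gt1.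
    exact: zz_order.
  by rewrite subn1; apply: acoef_mod.
apply/permP => x; have [h1 h2] := @prod_zz p 0 x (leqnn p).
apply: pt_eq => //; first by rewrite h1 rho1_ci.
by rewrite h2 rho1_cj // ci_lt.
Qed.
End Gam.

Section Tau.
Variable p : nat.
Hypothesis p_gt0 : (0 < p)%N.

Lemma tauE x : tau p x = zz p (p - 1) (rho2 p x).
Proof. by rewrite /tau /fcomp permM. Qed.

Lemma pm1 : (p - 1 < p)%N.
Proof. by move: p_gt0; lia. Qed.

Lemma tau_ci x : (tau p x %% p = (x %% p).+1 %% p)%N.
Proof. by rewrite tauE (zz_ci p_gt0 _ pm1) rho2_ci. Qed.

Lemma tau_cj x : (tau p x %/ p =
   if (x %% p).+1 %% p == p - 1 then (x %/ p).+1 %% p else x %/ p)%N.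
Proof. by rewrite tauE (zz_cj p_gt0 _ pm1) rho2_ci // rho2_cj. Qed.

Lemma mod_pm1 a : ((a %% p == p - 1) = (p %| a.+1))%N.
Proof.
have h := ltn_pmod a p_gt0.
rewrite {2}(divn_eq a p) -addnS dvdn_addr ?dvdn_mull //.
apply/eqP/idP => [->|hd].
  by have -> : ((p - 1).+1 = p)%N by move: p_gt0; lia.
have := dvdn_leq (ltn0Sn _) hd; move: h; lia.
Qed.

Lemma tauX_ci k x : ((tau p ^+ k) x %% p = (x %% p + k) %% p)%N.
Proof.
elim: k => [|k IH]; first by rewrite expg0 perm1 addn0 modn_mod.
by rewrite expgSr permM tau_ci IH modSm // addnS.
Qed.

Lemma tauX_cj k x :
  (((tau p ^+ k) x %/ p + (x %% p).+1 %/ p) %% p =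
   (x %/ p + (x %% p + k).+1 %/ p) %% p)%N.
Proof.
elim: k => [|k IH]; first by rewrite expg0 perm1 addn0.
rewrite expgSr permM tau_cj tauX_ci modSm // mod_pm1 addnS (divnS (x %% p + k).+1 p_gt0).
case: ifP => hd /=.
  by rewrite modnDml addSn -(modSm p (_ + (x %% p).+1 %/ p)) IH modSm add1n addnS.

by rewrite add0n IH.
Qed.

Lemma tau_p : tau p ^+ p = rho1 p.
Proof.
apply/permP => x; apply: pt_eq => //.
  by rewrite tauX_ci rho1_ci // modnDr modn_mod.
have h := tauX_cj p x.
rewrite -addSn (divnDr _ (dvdnn p)) divnn p_gt0 addnCA addnC in h.
rewrite rho1_cj //.
have h2 : ((tau p ^+ p) x %/ p == (x %/ p).+1 %[mod p])%N.
  by rewrite -(eqn_modDl ((x %% p).+1 %/ p)) h addn1.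
by rewrite -(eqP h2) modn_small // cj_lt.
Qed.

Lemma tau_order : tau p ^+ (p ^ 2) = 1.
Proof.
have e : (p ^ 2 = p * p)%N by rewrite expnS expn1.
by rewrite [X in tau p ^+ X]e expgM tau_p rho1_order.
Qed.

Lemma tau_free k x : (0 < k < p ^ 2)%N -> (tau p ^+ k) x != x.
Proof.
move=> /andP [k0 kp]; apply/eqP => e.
have h1 := tauX_ci k x; rewrite e in h1.
have : (x %% p + 0 == x %% p + k %[mod p])%N by rewrite addn0 modn_mod -h1.
rewrite eqn_modDl mod0n eq_sym => /eqP hk.
have km : k = (k %/ p * p)%N by rewrite {1}(divn_eq k p) hk addn0.
set m := (k %/ p)%N in km.
have m0 : (0 < m)%N by move: k0; rewrite km muln_gt0 => /andP [].
have mp : (m < p)%N by rewrite /m ltn_divLR // -(expnS p 1).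
move: e; rewrite km mulnC expgM tau_p => e.
have h2 := rho1X_cj p_gt0 m x; rewrite e in h2.
have : (x %/ p + 0 == x %/ p + m %[mod p])%N by rewrite addn0 modn_small ?cj_lt // -h2.
by rewrite eqn_modDl mod0n eq_sym modn_small // eqn0Ngt m0.
Qed.
End Tau.

Lemma transport (I T : finType) (a b : I -> T) :
  #|I| = #|T| -> injective a -> injective b ->
  exists s : {perm T}, forall i, s (a i) = b i.
Proof.
move=> cIT ai bi.
have onto : forall y, y \in codom a.
  by move=> y; apply: inj_card_onto => //; rewrite cIT.
pose f y := b (iinv (onto y)).
have fi : injective f.
  move=> y y'; rewrite /f => /bi e.
  by rewrite -(f_iinv (onto y)) e f_iinv.
exists (perm fi) => i; rewrite permE /f; congr b.
by apply: ai; rewrite f_iinv.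
Qed.

Lemma conj_of (T : finType) (s u v : {perm T}) :
  (forall x, s (u x) = v (s x)) -> u = v ^ s^-1.
Proof.
move=> H; apply/permP => x; rewrite conjgE invgK !permM -H.
by rewrite -permM mulgV perm1.
Qed.

Lemma cyc_inj (T : finType) (u : {perm T}) x0 n :
  (forall k, (0 < k < n)%N -> (u ^+ k) x0 != x0) ->
  injective (fun k : 'I_n => (u ^+ k) x0).
Proof.
move=> H.
suff S : forall i j : 'I_n, (i < j)%N -> (u ^+ i) x0 <> (u ^+ j) x0.
  move=> i j /= e; apply: val_inj => /=.
  case: (ltngtP i j) => // hij.
    by case: (S _ _ hij e).
  by case: (S _ _ hij (esym e)).
move=> i j hij e.
have ej : (nat_of_ord j = (j - i) + i)%N by rewrite subnK // ltnW.
move: e; rewrite ej expgD permM => /perm_inj e.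
have : (0 < j - i < n)%N by have := ltn_ord j; move: hij; lia.
by move/H; rewrite -e eqxx.
Qed.

Lemma shift_apply (T : finType) (u : {perm T}) x0 n k :
  u ^+ n = 1 -> u ((u ^+ k) x0) = (u ^+ (k.+1 %% n)) x0.
Proof. by move=> un; rewrite (expg_mod _ un) expgSr permM. Qed.

Lemma semireg (T : finType) (H : {set {perm T}}) (c : {perm T}) y0 :
  (forall x, exists2 h, h \in H & h y0 = x) ->
  (forall h, h \in H -> commute c h) -> c y0 = y0 -> c = 1.
Proof.
move=> tr cm cy; apply/permP => x; have [h hH <-] := tr x.
by rewrite perm1 -permM -(cm h hH) permM cy.
Qed.

Lemma trans_ex (T : finType) (G : {set {perm T}}) y0 :
  orbit 'P G y0 = [set: T] -> forall x, exists2 g, g \in G & g y0 = x.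
Proof.
move=> o x; have : x \in orbit 'P G y0 by rewrite o inE.
by case/orbitP => g gG <-; exists g.
Qed.

Lemma sylow_trans (p : nat) (T : finType) (G P : {group {perm T}}) (y0 : T) :
  prime p -> #|T| = (p ^ 2)%N -> orbit 'P G y0 = [set: T] ->
  p.-Sylow(G) P -> orbit 'P P y0 = [set: T].
Proof.
move=> pp cT oG sP.
have p0 := prime_gt0 pp.
have cG := card_orbit_stab 'P G y0.
have cP := card_orbit_stab 'P P y0.
rewrite oG cardsT cT in cG.
set s := #|'C_G[y0 | 'P]| in cG.
have sPG := pHall_sub sP.
have Ps_sub : 'C_P[y0 | 'P] \subset 'C_G[y0 | 'P] by apply: setSI.
have pPs : p.-group 'C_P[y0 | 'P] := pgroupS (subsetIl _ _) (pHall_pgroup sP).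
have d1 : (#|'C_P[y0 | 'P]| %| s`_p)%N.
  rewrite -(part_pnat_id pPs); apply: partn_dvd; first exact: cardG_gt0.
  exact: cardSg.
have cPp : #|P| = (p ^ 2 * s`_p)%N.
  rewrite (card_Hall sP) -cG partnM ?expn_gt0 ?p0 ?cardG_gt0 //.
  by rewrite part_pnat_id // pnatX pnat_id.
have [c hc] := dvdnP d1.
have c0 : (0 < c)%N.
  by move: (part_gt0 p s); rewrite hc muln_gt0 => /andP [].
have co : #|orbit 'P P y0| = (p ^ 2 * c)%N.
  apply/eqP; rewrite -(eqn_pmul2r (cardG_gt0 ('C_P[y0 | 'P])%G)) cP cPp hc.
  by rewrite mulnA.
apply/eqP; rewrite eqEcard subsetT cardsT cT co.
by rewrite leq_pmulr.
Qed.

Lemma order_ppow (p : nat) (T : finType) (A : {group {perm T}}) g :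
  p.-group A -> g \in A -> exists m, #[g] = (p ^ m)%N.
Proof.
move=> pA gA; have : p.-nat #[g] := pnat_dvd (order_dvdG gA) pA.
by case/p_natP => m ->; exists m.
Qed.

Section Main.
Variables (p : nat) (T : finType) (G : {group {perm T}}) (y0 : T).
Hypotheses (pp : prime p) (cT : #|T| = (p ^ 2)%N) (oG : orbit 'P G y0 = [set: T]).

Lemma regular_sub :
  (exists2 g, g \in G & (g ^+ (p ^ 2) = 1 /\ (forall k, (0 < k < p ^ 2)%N -> (g ^+ k) y0 != y0)))
  \/ (exists a, exists b, [/\ a \in G, b \in G, commute a b, (a ^+ p = 1 /\ b ^+ p = 1) &
        injective (fun ij : 'I_p * 'I_p => (a ^+ ij.1 * b ^+ ij.2) y0)]).
Proof.
have p0 := prime_gt0 pp; have p1 := prime_gt1 pp.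
have [P sP] := Sylow_exists p G.
have oP := sylow_trans pp cT oG sP.
have trP := trans_ex oP.
have pP := pHall_pgroup sP; have sPG := pHall_sub sP.
have ntP : ~~ (P :==: 1).
  rewrite trivg_card_le1 -ltnNge; apply: (@leq_trans #|orbit 'P P y0|).
    by rewrite oP cardsT cT; apply: (leq_trans p1); rewrite -{1}(expn1 p) leq_exp2l.
  exact/dvdn_leq/dvdn_orbit.
have ntZ : ~~ ('Z(P) :==: 1) by rewrite (center_nil_eq1 (pgroup_nil pP)).
have pZ : p.-group 'Z(P) := pgroupS (center_sub P) pP.
have [_ dZ _] := pgroup_pdiv pZ ntZ.
have [z zZ oz] := Cauchy pp dZ.
have [zP zc] := centerP _ _ zZ.
have zfree : forall k, (0 < k < p)%N -> (z ^+ k) y0 != y0.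
  move=> k /andP [k0 kp]; apply/eqP => e.
  have : z ^+ k = 1.
    apply: (semireg trP) e => h hP; apply: commute_sym; apply: commuteX.
    exact: commute_sym (zc h hP).
  move/eqP; rewrite -order_dvdn oz => /dvdn_leq; move: kp; lia.
pose f := fun k : 'I_p => (z ^+ k) y0.
have finj : injective f := cyc_inj zfree.
pose B0 := [set f k | k : 'I_p].
have cB0 : #|B0| = p by rewrite card_imset // card_ord.
have zB0 : forall k, (z ^+ k) y0 \in B0.
  move=> k; rewrite -(expg_mod_order z k) oz.
  by apply/imsetP; exists (Ordinal (ltn_pmod k p0)).
have : ~~ ([set: T] \subset B0).
  apply/negP => /subset_leq_card; rewrite cardsT cT cB0.
  by rewrite leqNgt -{1}(expn1 p) ltn_exp2l.
case/subsetPn => x _ xB0.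
have [h hP hx] := trP x.
pose A := <<[set z; h]>>%G.
have AP : A \subset P.
  by rewrite gen_subG; apply/subsetP => u; rewrite in_set2 => /orP [] /eqP ->.
have AG : A \subset G := subset_trans AP sPG.
have pA : p.-group A := pgroupS AP pP.
have zA : z \in A by apply: mem_gen; apply: set21.
have hA : h \in A by apply: mem_gen; apply: set22.
have cA : forall u v, u \in A -> v \in A -> commute u v.
  have ab : abelian A.
    rewrite abelian_gen; apply/centsP => u; rewrite in_set2 => /orP [] /eqP -> v;
      rewrite in_set2 => /orP [] /eqP -> //; first exact: zc.
    exact: commute_sym (zc h hP).
  by move=> u v uA vA; apply: (centsP ab).
have oA : orbit 'P A y0 = [set: T].
  have sub : x |: B0 \subset orbit 'P A y0.
    apply/subsetP => u; rewrite in_setU1 => /orP [/eqP ->|].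
      by rewrite -hx; apply: (mem_orbit 'P); exact: hA.
    case/imsetP => k _ ->; rewrite /f; apply: (mem_orbit 'P).
    exact: groupX.
  have c1 := subset_leq_card sub; rewrite cardsU1 xB0 cB0 add1n in c1.
  have : p.-nat #|orbit 'P A y0| := pnat_dvd (dvdn_orbit _ _ _) pA.
  case/p_natP => e ce.
  have c2 : (#|orbit 'P A y0| <= p ^ 2)%N by rewrite -cT; apply: max_card.
  rewrite ce in c1 c2.
  have e2 : e = 2%N.
    case: e c1 c2 {ce} => [|[|[|e]]] //= c1 c2.
    - by rewrite expn0 ltnS leqNgt p0 in c1.
    - by rewrite expn1 ltnn in c1.
    - by rewrite leq_exp2l // in c2.
  apply/eqP; rewrite eqEcard subsetT cardsT cT ce e2 leqnn.
  by [].
have trA := trans_ex oA.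
have regA : forall c, c \in A -> c y0 = y0 -> c = 1.
  move=> c cA' cy; apply: (semireg trA) cy => u uA; exact: cA.
have ordA : forall g, g \in A -> (#[g] = p ^ 2)%N \/ g ^+ p = 1.
  move=> g gA; have [m om] := order_ppow pA gA.
  have : (#[g] <= p ^ 2)%N.
    rewrite -cT; apply: (@leq_trans #|'I_#[g]|); first by rewrite card_ord.
    have ci : injective (fun k : 'I_#[g] => (g ^+ k) y0).
      apply: cyc_inj => k /andP [k0 kg]; apply/eqP => e.
      have : g ^+ k = 1 by apply: regA e; exact: groupX.
      by move/eqP; rewrite -order_dvdn => /(dvdn_leq k0); rewrite leqNgt kg.
    exact: leq_card ci.
  rewrite om leq_exp2l // => m2.
  case: m m2 om => [|[|[|m]]] // _ om.
  - by right; apply/eqP; rewrite -order_dvdn om dvd1n.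
  - by right; apply/eqP; rewrite -order_dvdn om expn1.
  - by left.
case: (boolP [exists (g | g \in A), #[g] == (p ^ 2)%N]).
  case/existsP => g /andP [gA /eqP og]; left; exists g.
    exact: (subsetP AG).
  split; first by rewrite -og expg_order.
  move=> k /andP [k0 kp]; apply/eqP => e.
  have : g ^+ k = 1 by apply: regA e; exact: groupX.
  by move/eqP; rewrite -order_dvdn og => /(dvdn_leq k0); rewrite leqNgt kp.
move=> noc; right.
have ordp : forall g, g \in A -> g ^+ p = 1.
  move=> g gA; case: (ordA g gA) => // og.
  by case/negP: noc; apply/existsP; exists g; rewrite gA og eqxx.
have hp : h ^+ p = 1 := ordp h hA.
have h1 : h != 1.
  apply/eqP => e; move: xB0; rewrite -hx e perm1.
  by have := zB0 0%N; rewrite expg0 perm1 => ->.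
have oh : #[h] = p.
  have : (#[h] %| p)%N by rewrite order_dvdn hp.
  case/primeP: pp => _ /[apply] /orP [/eqP o1|/eqP //].
  by move/eqP: o1; rewrite order_eq1 (negPf h1).
have TI : <[h]> :&: <[z]> = 1.
  apply: prime_TIg; first by rewrite [#|_|]oh.
  rewrite cycle_subG; apply/negP => /cycleP [i hi].
  by move: xB0; rewrite -hx hi zB0.
exists z, h; split.
- exact: (subsetP sPG).
- exact: (subsetP sPG).
- exact: zc.
- by split => //; rewrite -oz expg_order.
move=> [i j] [i' j'] /= e.
have cA1 : z ^+ i * h ^+ j \in A by rewrite groupM ?groupX.
have cA2 : z ^+ i' * h ^+ j' \in A by rewrite groupM ?groupX.
have cc : z ^+ i * h ^+ j = z ^+ i' * h ^+ j'.
  have : (z ^+ i * h ^+ j) * (z ^+ i' * h ^+ j')^-1 = 1.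
    apply: regA; first by rewrite groupM ?groupV.
    by rewrite permM e -permM mulgV perm1.
  by move/eqP; rewrite mulg_eq1 invgK => /eqP.
have := congr1 (fun t => (z ^+ i')^-1 * t * (h ^+ j)^-1) cc.
rewrite /= !mulgA mulgK mulVg mul1g => w_eq.
have wI : (z ^+ i')^-1 * z ^+ i \in <[h]> :&: <[z]>.
  rewrite inE; apply/andP; split.
    by rewrite w_eq groupM ?groupV ?mem_cycle.
  by rewrite groupM ?groupV ?mem_cycle.
move: wI; rewrite TI inE => /eqP w1.
move: w_eq; rewrite w1 => /esym/eqP; rewrite -eq_mulgV1 => /eqP ej.
move/eqP: w1; rewrite -eq_mulVg1 => ei.
have ei' : (i' %% #[z] == i %% #[z])%N by rewrite -eq_expg_mod_order.
have ej' : (j' %% #[h] == j %% #[h])%N by rewrite -eq_expg_mod_order ej.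
rewrite oz in ei'; rewrite oh in ej'.
rewrite !modn_small // in ei' ej'.
by rewrite (val_inj (eqP ei')) (val_inj (eqP ej')).
Qed.
End Main.

Unset Implicit Arguments.
Theorem lemma2p12 (p : nat) (G : {group {perm 'I_(p ^ 2)}}) :
  prime p ->
  [transitive G, on [set: 'I_(p ^ 2)] | 'P] ->
  exists s : {perm 'I_(p ^ 2)},
    (P1 p \subset G :^ s) \/ (P1' p \subset G :^ s).
Proof.
move=> pp trG; have p0 := prime_gt0 pp.
have pp0 : (0 < p ^ 2)%N by rewrite expn_gt0 p0.
pose y0 : 'I_(p ^ 2) := Ordinal pp0.
have oG : orbit 'P G y0 = [set: 'I_(p ^ 2)] by apply: (atransP trG); rewrite inE.
have cT : #|'I_(p ^ 2)| = (p ^ 2)%N by rewrite card_ord.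
case: (regular_sub pp cT oG).
  case=> g gG [gord gfree].
  have ai : injective (fun k : 'I_(p ^ 2) => (tau p ^+ k) y0).
    by apply: cyc_inj => k hk; apply: tau_free.
  have bi : injective (fun k : 'I_(p ^ 2) => (g ^+ k) y0) by apply: cyc_inj.
  have [s hs] := transport (erefl _) ai bi.
  have key : forall x, s (tau p x) = g (s x).
    move=> x; have /codomP [k ->] := inj_card_onto ai (leqnn _) x.
    pose k' : 'I_(p ^ 2) := Ordinal (ltn_pmod k.+1 pp0).
    rewrite /= (shift_apply _ _ (tau_order p0)) hs (shift_apply _ _ gord).
    exact: (hs k').
  exists s^-1; left; rewrite /P1 gen_subG; apply/subsetP => u.
  have tG : tau p \in G :^ s^-1 by rewrite (conj_of key) memJ_conjg.
  rewrite in_set2 => /orP [/eqP ->|/eqP ->] //.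
  by rewrite gamma1 // -tau_p // groupX.
case=> a [b [aG bG cab [ap bp] abi]].
pose pt := fun ij : 'I_p * 'I_p => (Ordinal (val_lt p0 ij.1 ij.2) : 'I_(p ^ 2)).
have pti : injective pt.
  move=> [i j] [i' j'] /(congr1 val) /= e.
  have e1 := congr1 (modn^~ p) e; have e2 := congr1 (divn^~ p) e.
  rewrite /= !val_mod // in e1; rewrite /= !val_div // in e2.
  rewrite !modn_small // in e1 e2.
  by rewrite (val_inj e1) (val_inj e2).
have cI : #|{: 'I_p * 'I_p}| = #|'I_(p ^ 2)| by rewrite card_prod !card_ord mulnn.
have [s hs] := transport cI pti abi.
have xE : forall x : 'I_(p ^ 2),
    x = pt (Ordinal (ci_lt p0 x), Ordinal (cj_lt p0 x)).
  move=> x; apply: pt_eq => //=; first by rewrite val_mod // modn_mod.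
  by rewrite val_div // modn_small // cj_lt.
have key2 : forall x, s (rho2 p x) = a (s x).
  move=> x.
  have -> : rho2 p x = pt (Ordinal (ltn_pmod (x %% p).+1 p0), Ordinal (cj_lt p0 x)).
    apply: pt_eq => //=; first by rewrite val_mod // rho2_ci // modn_mod.
    by rewrite val_div // rho2_cj // modn_small // cj_lt.
  rewrite hs [in RHS](xE x) hs /= (expg_mod _ ap) expgSr -mulgA (commuteX _ cab) mulgA.
  by rewrite permM.
have key1 : forall x, s (rho1 p x) = b (s x).
  move=> x.
  have -> : rho1 p x = pt (Ordinal (ci_lt p0 x), Ordinal (ltn_pmod (x %/ p).+1 p0)).
    apply: pt_eq => //=; first by rewrite val_mod // rho1_ci // modn_mod.
    by rewrite val_div // rho1_cj // modn_mod.
  rewrite hs [in RHS](xE x) hs /= (expg_mod _ bp) expgSr mulgA.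
  by rewrite permM.
exists s^-1; right; rewrite /P1' gen_subG; apply/subsetP => u.
have r1 : rho1 p \in G :^ s^-1 by rewrite (conj_of key1) memJ_conjg.
have r2 : rho2 p \in G :^ s^-1 by rewrite (conj_of key2) memJ_conjg.
rewrite !inE => /orP [/orP [/eqP ->|/eqP ->]|/eqP ->] //.
by rewrite gamma1.
Qed.
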